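(* Let $I\subseteq\mathbb{N}$ and let $(\mathcal{G}_N)_{N\in I}$ be a sequence of symmetric connected graphs with $\mathcal{G}_N=(\mathcal{V}_N,\mathcal{E}_N)$ and $|\mathcal{V}_N|=N$, with maximum degree $\deg_{\max}(N)$ and spectral gap $\lambda_1(N)$. Fix $q\in(0,1)$. If $\deg_{\max}(N)^2/\lambda_1(N)=o(N)$ as $N\to+\infty$, then the BGA with mixing parameter $q$ is asymptotically unbiased on this sequence, i.e. $\lim_{N\to+\infty}\mathbb{E}[\beta(\infty)]=0$, where $\mathbb{E}[\beta(\infty)]$ is computed for the BGA run on $\mathcal{G}_N$.
   Context: Graph and neighborhoods: for a graph $\mathcal{G}=(\mathcal{V},\mathcal{E})$ with $\mathcal{E}\subset\mathcal{V}\times\mathcal{V}$ and $N=|\mathcal{V}|$, the out-neighborhood of $v$ is $\mathcal{N}^+_v=\{u\in\mathcal{V}:(u,v)\in\mathcal{E}\}$ and the in-neighborhood is $\mathcal{N}^-_v=\{u\in\mathcal{V}:(v,u)\in\mathcal{E}\}$; $\deg^\pm_v=|\mathcal{N}^\pm_v|$, $\deg_{\max}=\max_v\max\{\deg^+_v,\deg^-_v\}$. The graph is symmetric if $\mathcal{N}^+_v=\mathcal{N}^-_v$ for all $v$. The spectral gap $\lambda_1$ is the smallest nonzero eigenvalue (in modulus) of the Laplacian matrix. BGA: given initial values $x_v(0)\in[0,L]$ and a mixing parameter $q\in(0,1)$, at each time $t\in\mathbb{Z}_{\ge0}$ one node $v$ is sampled uniformly at random from $\mathcal{V}$ (independently over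 time); every $u\in\mathcal{N}^+_v$ updates $x_u(t+1)=(1-q)x_u(t)+q\,x_v(t)$, and every $u\notin\mathcal{N}^+_v$ keeps $x_u(t+1)=x_u(t)$. Notation: $x_{\mathrm{ave}}(t)=N^{-1}\sum_v x_v(t)$, $\beta(t)=|x_{\mathrm{ave}}(t)-x_{\mathrm{ave}}(0)|^2$, $\mathbb{E}[\beta(\infty)]:=\lim_{t\to\infty}\mathbb{E}[\beta(t)]$. The BGA is asymptotically unbiased if $\lim_{N\to+\infty}\mathbb{E}[\beta(\infty)]=0$. *)

(* Defs.v *)
From Stdlib Require Import Reals Lra List Relations.
Import ListNotations.
Open Scope R_scope.

(* A graph on N vertices is given by N and an edge relation E : nat -> nat -> bool;
   the vertex set is {0,...,N-1} and the edge set is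
   {(u,v) | u < N, v < N, E u v = true}.  Values of E outside this range are ignored. *)

Definition vsum (N : nat) (f : nat -> R) : R :=
  fold_right Rplus 0 (map f (seq 0 N)).

Definition out_nbhd (N : nat) (E : nat -> nat -> bool) (v : nat) : list nat :=
  filter (fun u => E u v) (seq 0 N).
Definition in_nbhd (N : nat) (E : nat -> nat -> bool) (v : nat) : list nat :=
  filter (fun u => E v u) (seq 0 N).

Definition deg_out N E v : nat := length (out_nbhd N E v).
Definition deg_in N E v : nat := length (in_nbhd N E v).

Definition deg_max (N : nat) (E : nat -> nat -> bool) : nat :=
  fold_right Nat.max 0%nat (map (fun v => Nat.max (deg_out N E v) (deg_in N E v)) (seq 0 N)).

Definition symmetric_graph (N : nat) (E : nat -> nat -> bool) : Prop :=
  forall v, (v < N)%nat -> out_nbhd N E v = in_nbhd N E v.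

Definition edge_rel (N : nat) (E : nat -> nat -> bool) : relation nat :=
  fun u v => (u < N)%nat /\ (v < N)%nat /\ E u v = true.

Definition connected_graph (N : nat) (E : nat -> nat -> bool) : Prop :=
  forall u v, (u < N)%nat -> (v < N)%nat -> clos_refl_trans nat (edge_rel N E) u v.

Definition laplacian_apply (N : nat) (E : nat -> nat -> bool) (x : nat -> R) (v : nat) : R :=
  INR (deg_out N E v) * x v - vsum N (fun u => if E u v then x u else 0).

Definition is_laplacian_eigenvalue (N : nat) (E : nat -> nat -> bool) (mu : R) : Prop :=
  exists x : nat -> R,
    (exists v, (v < N)%nat /\ x v <> 0) /\
    (forall v, (v < N)%nat -> laplacian_apply N E x v = mu * x v).

(* spectral gap: smallest modulus of a nonzero eigenvalue of the Laplacian
   (the Laplacian of a symmetric graph is a real symmetric matrix, so all its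
   eigenvalues are real and admit real eigenvectors) *)
Definition is_spectral_gap (N : nat) (E : nat -> nat -> bool) (g : R) : Prop :=
  (exists mu, is_laplacian_eigenvalue N E mu /\ mu <> 0 /\ Rabs mu = g) /\
  (forall mu, is_laplacian_eigenvalue N E mu -> mu <> 0 -> g <= Rabs mu).

Definition bga_step (E : nat -> nat -> bool) (q : R) (v : nat) (x : nat -> R) : nat -> R :=
  fun u => if E u v then (1 - q) * x u + q * x v else x u.

(* E[f(x(t))] for the BGA started from x, with node sampled uniformly
   and independently among {0,...,N-1} at each time *)
Fixpoint bga_expect (N : nat) (E : nat -> nat -> bool) (q : R) (t : nat)
    (x : nat -> R) (f : (nat -> R) -> R) : R :=
  match t with
  | O => f x
  | S t' => / INR N * vsum N (fun v => bga_expect N E q t' (bga_step E q v x) f)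
  end.

Definition x_ave (N : nat) (x : nat -> R) : R := / INR N * vsum N x.

Definition E_beta (N : nat) (E : nat -> nat -> bool) (q : R) (x0 : nat -> R) (t : nat) : R :=
  bga_expect N E q t x0 (fun x => (x_ave N x - x_ave N x0) ^ 2).

(* Main.v *)
Require Import Defs.
From Stdlib Require Import Reals Lra Lia List Relations Classical ClassicalEpsilon.
Import ListNotations.
Open Scope R_scope.

Lemma vsum_S N f : vsum (S N) f = vsum N f + f N.
Proof.
  unfold vsum. rewrite seq_S, map_app, fold_right_app. simpl.
  generalize (map f (seq 0 N)) as l. induction l; simpl; [ring| rewrite IHl; ring].
Qed.

Lemma vsum_ext N f g : (forall i, (i < N)%nat -> f i = g i) -> vsum N f = vsum N g.
Proof. induction N; intros H; [reflexivity|]. rewrite !vsum_S, IHN, H; auto; lia. Qed.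

Lemma vsum_plus N f g : vsum N (fun i => f i + g i) = vsum N f + vsum N g.
Proof. induction N; [simpl; unfold vsum; simpl; ring|]. rewrite !vsum_S, IHN; ring. Qed.

Lemma vsum_scal N c f : vsum N (fun i => c * f i) = c * vsum N f.
Proof. induction N; [unfold vsum; simpl; ring|]. rewrite !vsum_S, IHN; ring. Qed.

Lemma vsum_const N c : vsum N (fun _ => c) = INR N * c.
Proof. induction N; [unfold vsum; simpl; ring|]. rewrite !vsum_S, IHN, S_INR; ring. Qed.

Lemma vsum_le N f g : (forall i, (i < N)%nat -> f i <= g i) -> vsum N f <= vsum N g.
Proof. induction N; intros H; [unfold vsum; simpl; lra|]. rewrite !vsum_S.
  assert (f N <= g N) by (apply H; lia). assert (vsum N f <= vsum N g) by (apply IHN; intros; apply H; lia). lra. Qed.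

Lemma vsum_nonneg N f : (forall i, (i < N)%nat -> 0 <= f i) -> 0 <= vsum N f.
Proof. intros H. rewrite <- (Rmult_0_r (INR N)), <- vsum_const. apply vsum_le; auto. Qed.

Lemma vsum_abs N f : Rabs (vsum N f) <= vsum N (fun i => Rabs (f i)).
Proof. induction N; [unfold vsum; simpl; rewrite Rabs_R0; lra|]. rewrite !vsum_S.
  eapply Rle_trans; [apply Rabs_triang|]. lra. Qed.

Lemma vsum_swap N F : vsum N (fun v => vsum N (fun u => F u v)) = vsum N (fun u => vsum N (fun v => F u v)).
Proof. induction N; [reflexivity|].
  rewrite (vsum_S N (fun v => vsum (S N) (fun u => F u v))), (vsum_S N (fun u => vsum (S N) (fun v => F u v))).
  rewrite (vsum_ext N (fun v => vsum (S N) (fun u => F u v)) (fun v => vsum N (fun u => F u v) + F N v))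
    by (intros; rewrite vsum_S; reflexivity).
  rewrite (vsum_ext N (fun u => vsum (S N) (fun v => F u v)) (fun u => vsum N (fun v => F u v) + F u N))
    by (intros; rewrite vsum_S; reflexivity).
  rewrite !vsum_plus, IHN, !vsum_S.
  change (vsum N (F N)) with (vsum N (fun v => F N v)). ring. Qed.

Lemma cs_step A W Q w a : A^2 <= W*Q -> 0 <= W -> 0 <= Q -> 0 <= w ->
  (A + w*a)^2 <= (W+w)*(Q + w*a^2).
Proof. intros H1 H2 H3 H4.
  assert (K : 0 <= W*a^2 + Q - 2*a*A).
  { destruct (Req_dec W 0) as [E|E].
    - subst. assert (A = 0) by nra. subst. nra.
    - assert (E2 : W*(W*a^2+Q-2*a*A) = (W*a-A)^2 + (W*Q - A^2)) by ring.
      assert (0 <= (W*a-A)^2) by apply pow2_ge_0.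
      assert (W > 0) by lra.
      destruct (Rle_dec 0 (W*a^2 + Q - 2*a*A)) as [|n]; auto.
      assert (W*(W*a^2+Q-2*a*A) < 0) by nra; lra. }
  assert (E3 : (W+w)*(Q + w*a^2) - (A + w*a)^2 = (W*Q - A^2) + w*(W*a^2 + Q - 2*a*A)) by ring.
  assert (0 <= w*(W*a^2 + Q - 2*a*A)) by (apply Rmult_le_pos; auto).
  lra. Qed.

Lemma vsum_cs N w a : (forall i, (i<N)%nat -> 0 <= w i) ->
  (vsum N (fun i => w i * a i))^2 <= vsum N w * vsum N (fun i => w i * (a i)^2).
Proof. induction N; intros H; [unfold vsum; simpl; lra|]. rewrite !vsum_S.
  apply cs_step; [apply IHN; intros; apply H; lia | apply vsum_nonneg; intros; apply H; lia
   | apply vsum_nonneg; intros; assert (0 <= w i) by (apply H; lia); nra | apply H; lia]. Qed.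

Lemma len_filter p N : INR (length (filter p (seq 0 N))) = vsum N (fun u => if p u then 1 else 0).
Proof. induction N; [reflexivity|]. rewrite seq_S, filter_app, app_length, plus_INR, IHN, vsum_S.
  simpl. destruct (p N); simpl; ring. Qed.


Definition chi (e : nat -> nat -> bool) u v : R := if e u v then 1 else 0.
Definition Delta (N : nat) e (y : nat -> R) v := vsum N (fun u => chi e u v * (y v - y u)).
Definition Dd (N : nat) e (y : nat -> R) :=
  vsum N (fun v => vsum N (fun u => chi e u v * (y v - y u)^2)).
Definition Ssq (N : nat) (y : nat -> R) := vsum N (fun u => y u ^ 2).
Definition Sym (N : nat) (e : nat -> nat -> bool) := forall u v, (u < N)%nat -> (v < N)%nat -> e u v = e v u.

Lemma chi_nonneg e u v : 0 <= chi e u v.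
Proof. unfold chi; destruct (e u v); lra. Qed.

Lemma deg_out_chi N e v : INR (deg_out N e v) = vsum N (fun u => chi e u v).
Proof. unfold deg_out, out_nbhd. rewrite len_filter. reflexivity. Qed.

Lemma step_pt e q v y u : bga_step e q v y u = y u + chi e u v * (q * (y v - y u)).
Proof. unfold bga_step, chi; destruct (e u v); ring. Qed.

Lemma sum_step N e q v y : vsum N (bga_step e q v y) = vsum N y + q * Delta N e y v.
Proof. rewrite (vsum_ext N _ (fun u => y u + chi e u v * (q * (y v - y u)))) by (intros; apply step_pt).
  rewrite vsum_plus. unfold Delta. rewrite <- vsum_scal. f_equal. apply vsum_ext; intros; ring. Qed.

Lemma sym_swap N e F : Sym N e ->
  vsum N (fun v => vsum N (fun u => chi e u v * F u v)) = vsum N (fun v => vsum N (fun u => chi e u v * F v u)).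
Proof. intros HS. rewrite vsum_swap. apply vsum_ext; intros v Hv. apply vsum_ext; intros u Hu.
  unfold chi. rewrite (HS v u); auto. Qed.

Lemma dsum_ext N F G : (forall u v, (u<N)%nat -> (v<N)%nat -> F u v = G u v) ->
  vsum N (fun v => vsum N (fun u => F u v)) = vsum N (fun v => vsum N (fun u => G u v)).
Proof. intros H. apply vsum_ext; intros v Hv; apply vsum_ext; intros u Hu; auto. Qed.

Lemma dsum_plus N F G : vsum N (fun v => vsum N (fun u => F u v + G u v)) =
  vsum N (fun v => vsum N (fun u => F u v)) + vsum N (fun v => vsum N (fun u => G u v)).
Proof. rewrite <- vsum_plus. apply vsum_ext; intros; apply vsum_plus. Qed.

Lemma dsum_scal N c F : vsum N (fun v => vsum N (fun u => c * F u v)) =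
  c * vsum N (fun v => vsum N (fun u => F u v)).
Proof. rewrite <- vsum_scal. apply vsum_ext; intros; apply vsum_scal. Qed.

Lemma factA N e y : Sym N e -> vsum N (fun v => Delta N e y v) = 0.
Proof. intros HS. unfold Delta.
  set (X := vsum N (fun v => vsum N (fun u => chi e u v * (y v - y u)))).
  assert (X = - X).
  { unfold X at 1. rewrite (sym_swap N e (fun u v => y v - y u)) by auto.
    rewrite <- (Rmult_1_l X). rewrite Ropp_mult_distr_l. unfold X. rewrite <- dsum_scal.
    apply dsum_ext; intros; ring. }
  lra. Qed.

Lemma sq_step_pt e q v y u : (bga_step e q v y u)^2 =
  y u ^2 + chi e u v * (2*q*(y u*(y v - y u)) + q^2 * (y v - y u)^2).
Proof. unfold bga_step, chi; destruct (e u v); ring. Qed.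

Lemma factC N e q y : Sym N e ->
  vsum N (fun v => Ssq N (bga_step e q v y)) = INR N * Ssq N y - q*(1-q) * Dd N e y.
Proof. intros HS. unfold Ssq.
  rewrite (dsum_ext N (fun u v => (bga_step e q v y u)^2)
     (fun u v => y u ^2 + chi e u v * (2*q*(y u*(y v - y u)) + q^2 * (y v - y u)^2)))
    by (intros; apply sq_step_pt).
  rewrite dsum_plus.
  rewrite vsum_const.
  set (T := vsum N (fun v => vsum N (fun u => chi e u v * (y u*(y v - y u))))).
  assert (HT : 2 * T = - Dd N e y).
  { assert (T = vsum N (fun v => vsum N (fun u => chi e u v * (y v*(y u - y v))))).
    { unfold T. apply (sym_swap N e (fun u v => y u * (y v - y u))); auto. }
    replace (2*T) with (T + T) by ring. rewrite H at 2. unfold T. rewrite <- dsum_plus.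
    replace (- Dd N e y) with (-1 * Dd N e y) by ring.
    unfold Dd. rewrite <- dsum_scal.
    apply dsum_ext; intros; ring. }
  rewrite (dsum_ext N _ (fun u v => (2*q) * (chi e u v * (y u*(y v - y u))) + q^2 * (chi e u v * (y v - y u)^2)))
    by (intros; ring).
  rewrite dsum_plus, !dsum_scal. fold T. unfold Dd in *. nra. Qed.

Lemma factB N e y dm : (forall v, (v<N)%nat -> (deg_out N e v <= dm)%nat) ->
  vsum N (fun v => (Delta N e y v)^2) <= INR dm * Dd N e y.
Proof. intros Hd. unfold Dd. rewrite <- vsum_scal. apply vsum_le; intros v Hv.
  unfold Delta. eapply Rle_trans.
  - apply (vsum_cs N (fun u => chi e u v) (fun u => y v - y u)). intros; apply chi_nonneg.
  - rewrite <- deg_out_chi. apply Rmult_le_compat_r.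
    + apply vsum_nonneg; intros. pose proof (chi_nonneg e i v). pose proof (pow2_ge_0 (y v - y i)). nra.
    + apply le_INR; auto. Qed.

Lemma sq_expand N a b D : vsum N (fun v => (a + b * D v)^2) =
  INR N * a^2 + 2*a*b*vsum N D + b^2 * vsum N (fun v => (D v)^2).
Proof. rewrite (vsum_ext N _ (fun v => a^2 + ((2*a*b) * D v + b^2 * (D v)^2))) by (intros; ring).
  rewrite vsum_plus, vsum_const, vsum_plus, !vsum_scal. ring. Qed.

Lemma ave_step N e q v y c : (0 < N)%nat ->
  x_ave N (bga_step e q v y) - c = (x_ave N y - c) + (q / INR N) * Delta N e y v.
Proof. intros H. unfold x_ave. rewrite sum_step. field. apply not_0_INR; lia. Qed.


Lemma E_mono N e q t : (0 < N)%nat -> forall x f g, (forall y, f y <= g y) ->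
  bga_expect N e q t x f <= bga_expect N e q t x g.
Proof. intros HN. induction t; intros x f g H; simpl; auto.
  apply Rmult_le_compat_l; [left; apply Rinv_0_lt_compat, lt_0_INR; lia|].
  apply vsum_le; intros; auto. Qed.

Lemma E_super N e q f : (0 < N)%nat ->
  (forall y, / INR N * vsum N (fun v => f (bga_step e q v y)) <= f y) ->
  forall t x, bga_expect N e q t x f <= f x.
Proof. intros HN H. induction t; intros x; simpl; [lra|].
  eapply Rle_trans; [|apply H]. apply Rmult_le_compat_l; [left; apply Rinv_0_lt_compat, lt_0_INR; lia|].
  apply vsum_le; intros; auto. Qed.

Lemma E_sub N e q f : (0 < N)%nat ->
  (forall y, f y <= / INR N * vsum N (fun v => f (bga_step e q v y))) ->
  forall t x, bga_expect N e q t x f <= bga_expect N e q (S t) x f.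
Proof. intros HN H. induction t; intros x; [simpl; apply H|].
  change (bga_expect N e q (S t) x f) with (/ INR N * vsum N (fun v => bga_expect N e q t (bga_step e q v x) f)).
  change (bga_expect N e q (S (S t)) x f) with (/ INR N * vsum N (fun v => bga_expect N e q (S t) (bga_step e q v x) f)).
  apply Rmult_le_compat_l; [left; apply Rinv_0_lt_compat, lt_0_INR; lia|].
  apply vsum_le; intros; auto. Qed.

Definition Phi N K c (y : nat -> R) := (x_ave N y - c)^2 + K * Ssq N y.

Lemma Phi_super N e q dm K c y : (0 < N)%nat -> Sym N e ->
  (forall v, (v<N)%nat -> (deg_out N e v <= dm)%nat) ->
  K * (q*(1-q)) = (q / INR N)^2 * INR dm ->
  / INR N * vsum N (fun v => Phi N K c (bga_step e q v y)) <= Phi N K c y.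
Proof. intros HN HS Hd HK. unfold Phi.
  rewrite vsum_plus, vsum_scal.
  rewrite (vsum_ext N _ (fun v => ((x_ave N y - c) + (q / INR N) * Delta N e y v)^2))
    by (intros; rewrite ave_step; auto).
  rewrite sq_expand, factA, factC by auto.
  pose proof (factB N e y dm Hd).
  assert (0 < INR N) by (apply lt_0_INR; lia).
  assert (0 <= (q / INR N)^2) by apply pow2_ge_0.
  assert ((q/INR N)^2 * vsum N (fun v => Delta N e y v ^ 2) <= (q/INR N)^2 * (INR dm * Dd N e y))
    by (apply Rmult_le_compat_l; auto).
  set (a := x_ave N y - c). set (b := q / INR N). fold b in H1, H2, HK.
  set (S0 := vsum N (fun v => Delta N e y v ^ 2)) in *.
  apply (Rmult_le_reg_l (INR N)); auto. rewrite <- Rmult_assoc, Rinv_r by lra.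
  assert (K * (q * (1 - q) * Dd N e y) = b^2 * (INR dm * Dd N e y)) by (rewrite <- Rmult_assoc, HK; ring). nra. Qed.

Lemma beta_sub N e q c y : (0 < N)%nat -> Sym N e ->
  (x_ave N y - c)^2 <= / INR N * vsum N (fun v => (x_ave N (bga_step e q v y) - c)^2).
Proof. intros HN HS.
  rewrite (vsum_ext N _ (fun v => ((x_ave N y - c) + (q / INR N) * Delta N e y v)^2))
    by (intros; rewrite ave_step; auto).
  rewrite sq_expand, factA by auto.
  assert (0 < INR N) by (apply lt_0_INR; lia).
  assert (0 <= vsum N (fun v => Delta N e y v ^ 2)) by (apply vsum_nonneg; intros; apply pow2_ge_0).
  assert (0 <= (q / INR N)^2) by apply pow2_ge_0.
  apply (Rmult_le_reg_l (INR N)); auto. rewrite <- Rmult_assoc, Rinv_r by lra.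
  nra. Qed.


Lemma sym_of N e : symmetric_graph N e -> Sym N e.
Proof. intros H u v Hu Hv. specialize (H v Hv). unfold out_nbhd, in_nbhd in H.
  assert (E1 : In u (filter (fun u => e u v) (seq 0 N)) <-> In u (filter (fun u => e v u) (seq 0 N)))
    by (rewrite H; tauto).
  rewrite !filter_In, !in_seq in E1.
  destruct (e u v), (e v u); auto.
  - destruct E1 as [E1 _]. destruct E1; auto; lia.
  - destruct E1 as [_ E1]. destruct E1; auto; lia. Qed.

Lemma fold_max_ge (h : nat -> nat) l a : In a l -> (h a <= fold_right Nat.max 0 (map h l))%nat.
Proof. induction l; simpl; [tauto|]. intros [->|H]; [lia|]. specialize (IHl H). lia. Qed.

Lemma deg_le N e v : (v < N)%nat -> (deg_out N e v <= deg_max N e)%nat.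
Proof. intros H. unfold deg_max.
  pose proof (fold_max_ge (fun v => Nat.max (deg_out N e v) (deg_in N e v)) (seq 0 N) v) as K.
  simpl in K. assert (In v (seq 0 N)) by (apply in_seq; lia). specialize (K H0). lia. Qed.

Lemma argmax (x : nat -> R) N : (0 < N)%nat -> exists v, (v < N)%nat /\ forall u, (u < N)%nat -> Rabs (x u) <= Rabs (x v).
Proof. induction N; intros H; [lia|]. destruct N.
  - exists 0%nat. split; [lia|]. intros u Hu. assert (u = 0%nat) by lia. subst; lra.
  - destruct IHN as [v [Hv Hm]]; [lia|].
    destruct (Rle_dec (Rabs (x v)) (Rabs (x (S N)))).
    + exists (S N). split; [lia|]. intros u Hu. destruct (Nat.eq_dec u (S N)); [subst; lra|].
      specialize (Hm u ltac:(lia)). lra.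
    + exists v. split; [lia|]. intros u Hu. destruct (Nat.eq_dec u (S N)); [subst; lra|]. apply Hm; lia. Qed.

Lemma gap_facts N e g : is_spectral_gap N e g -> (0 < N)%nat /\ 0 < g /\ g <= 2 * INR (deg_max N e).
Proof. intros [[mu [[x [[w [Hw Hxw]] Hx]] [Hmu Hg]]] _].
  assert (HN : (0 < N)%nat) by lia. split; auto. split; [subst g; apply Rabs_pos_lt; auto|].
  destruct (argmax x N HN) as [v [Hv Hm]].
  assert (Hpos : 0 < Rabs (x v)) by (pose proof (Hm w Hw); pose proof (Rabs_pos_lt _ Hxw); lra).
  specialize (Hx v Hv). unfold laplacian_apply in Hx.
  assert (B : Rabs (vsum N (fun u => if e u v then x u else 0)) <= INR (deg_out N e v) * Rabs (x v)).
  { eapply Rle_trans; [apply vsum_abs|]. rewrite deg_out_chi, Rmult_comm, <- vsum_scal.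
    apply vsum_le; intros u Hu. unfold chi. specialize (Hm u Hu). destruct (e u v).
    - lra.
    - rewrite Rabs_R0; lra. }
  assert (A : Rabs mu * Rabs (x v) <= 2 * INR (deg_out N e v) * Rabs (x v)).
  { rewrite <- Rabs_mult, <- Hx. eapply Rle_trans; [apply Rabs_triang|]. rewrite Rabs_Ropp, Rabs_mult.
    rewrite (Rabs_right (INR _)) by (apply Rle_ge, pos_INR). lra. }
  assert (Rabs mu <= 2 * INR (deg_out N e v)) by (apply (Rmult_le_reg_r (Rabs (x v))); auto; lra).
  pose proof (le_INR _ _ (deg_le N e v Hv)). subst g. lra. Qed.


Lemma per_N N e q L x0 lam :
  symmetric_graph N e -> is_spectral_gap N e lam -> 0 < q < 1 ->
  (forall v, (v < N)%nat -> 0 <= x0 v <= L) ->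
  exists l, Un_cv (fun t => E_beta N e q x0 t) l /\ 0 <= l /\
    l <= q * INR (deg_max N e) * L^2 / ((1-q) * INR N).
Proof. intros Hs Hg Hq Hx.
  destruct (gap_facts N e lam Hg) as [HN [Hl Hl2]].
  pose proof (sym_of N e Hs) as HS.
  set (dm := deg_max N e).
  assert (HNr : 0 < INR N) by (apply lt_0_INR; lia).
  set (c := x_ave N x0).
  set (f := fun y => (x_ave N y - c)^2).
  set (u := fun t => E_beta N e q x0 t).
  assert (Hu : forall t, u t = bga_expect N e q t x0 f) by reflexivity.
  set (K := q * INR dm / ((1-q) * INR N ^ 2)).
  assert (HK : K * (q*(1-q)) = (q / INR N)^2 * INR dm) by (unfold K; field; split; lra).
  set (B := q * INR dm * L^2 / ((1-q) * INR N)).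
  assert (HB : forall t, u t <= B).
  { intros t. rewrite Hu. eapply Rle_trans.
    - apply (E_mono N e q t HN x0 f (Phi N K c)). intros y. unfold f, Phi.
      assert (0 <= K) by (unfold K; apply Rmult_le_pos; [pose proof (pos_INR dm); nra|
         left; apply Rinv_0_lt_compat; apply Rmult_lt_0_compat; [lra| apply pow_lt; lra]]).
      assert (0 <= Ssq N y) by (apply vsum_nonneg; intros; apply pow2_ge_0). nra.
    - eapply Rle_trans; [apply E_super; auto; intros; apply (Phi_super N e q dm); auto; intros; apply deg_le; auto|].
      unfold Phi. unfold c. rewrite Rminus_diag, pow_i by lia.
      assert (Ssq N x0 <= INR N * L^2).
      { unfold Ssq. rewrite <- vsum_const. apply vsum_le. intros i Hi. specialize (Hx i Hi). nra. }
      assert (0 <= K) by (unfold K; apply Rmult_le_pos; [pose proof (pos_INR dm); nra|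
         left; apply Rinv_0_lt_compat; apply Rmult_lt_0_compat; [lra| apply pow_lt; lra]]).
      apply Rle_trans with (K * (INR N * L^2)); [nra|].
      right. unfold B, K. field. split; lra. }
  assert (Hgr : Un_growing u).
  { intros t. rewrite !Hu. apply E_sub; auto. intros y. unfold f. apply beta_sub; auto. }
  destruct (growing_cv u Hgr) as [l Hl3].
  { exists B. intros r [t ->]. auto. }
  exists l. split; [exact Hl3|]. split.
  - pose proof (growing_ineq u l Hgr Hl3 0). rewrite Hu in H. simpl in H. unfold f in H.
    pose proof (pow2_ge_0 (x_ave N x0 - c)). lra.
  - destruct (Rle_dec l B) as [|n]; [exact r|]. exfalso.
    destruct (Hl3 (l - B)) as [n0 Hn0]; [lra|]. specialize (Hn0 n0 (Nat.le_refl _)).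
    specialize (HB n0). unfold Rdist in Hn0. apply Rabs_def2 in Hn0. lra. Qed.


Theorem corollary1
  (I : nat -> Prop) (G : nat -> nat -> nat -> bool) (lam1 : nat -> R)
  (q L : R) (x0 : nat -> nat -> R)
  (Hsym : forall N, I N -> symmetric_graph N (G N))
  (Hconn : forall N, I N -> connected_graph N (G N))
  (Hgap : forall N, I N -> is_spectral_gap N (G N) (lam1 N))
  (Hq : 0 < q < 1)
  (Hx0 : forall N, I N -> forall v, (v < N)%nat -> 0 <= x0 N v <= L)
  (Hlittle_o : forall eps, eps > 0 -> exists N0, forall N, I N -> (N0 <= N)%nat ->
       Rabs ((INR (deg_max N (G N))) ^ 2 / lam1 N) <= eps * INR N) :
  exists Einf : nat -> R,
    (forall N, I N -> Un_cv (fun t => E_beta N (G N) q (x0 N) t) (Einf N)) /\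
    (forall eps, eps > 0 -> exists N0, forall N, I N -> (N0 <= N)%nat -> Rabs (Einf N) < eps).
Proof.
  assert (H : forall N, exists l, I N -> Un_cv (fun t => E_beta N (G N) q (x0 N) t) l /\ 0 <= l /\
    l <= q * INR (deg_max N (G N)) * L^2 / ((1-q) * INR N)).
  { intros N. destruct (classic (I N)) as [HI|HI].
    - destruct (per_N N (G N) q L (x0 N) (lam1 N)) as [l Hl]; auto. exists l; auto.
    - exists 0. tauto. }
  exists (fun N => proj1_sig (constructive_indefinite_description _ (H N))).
  split.
  - intros N HI. destruct (constructive_indefinite_description _ (H N)) as [l Hl]; simpl. apply Hl; auto.
  - intros eps Heps.
    assert (0 <= L^2) by apply pow2_ge_0.
    set (e' := eps * (1-q) / (4*q*(L^2) + 1)).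
    assert (He' : e' > 0).
    { unfold e'. apply Rmult_lt_0_compat; [apply Rmult_lt_0_compat; lra|].
      apply Rinv_0_lt_compat. nra. }
    destruct (Hlittle_o e' He') as [N0 HN0]. exists N0. intros N HI HN.
    cbv beta. generalize (proj2_sig (constructive_indefinite_description _ (H N))).
    generalize (proj1_sig (constructive_indefinite_description _ (H N))). intros l Hl.
    destruct (Hl HI) as [_ [Hl0 HlB]].
    destruct (gap_facts N (G N) (lam1 N) (Hgap N HI)) as [HNp [Hlp Hl2]].
    specialize (HN0 N HI HN).
    set (dm := INR (deg_max N (G N))) in *.
    assert (HNr : 0 < INR N) by (apply lt_0_INR; lia).
    assert (Hdm0 : 0 <= dm) by apply pos_INR.
    assert (Hr : 0 <= dm ^ 2 / lam1 N) by (apply Rmult_le_pos; [apply pow2_ge_0| left; apply Rinv_0_lt_compat; lra]).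
    rewrite Rabs_right in HN0 by lra.
    assert (Hd : dm <= 2 * (dm^2 / lam1 N)).
    { apply (Rmult_le_reg_r (lam1 N)); auto. unfold Rdiv.
      replace (2 * (dm ^ 2 * / lam1 N) * lam1 N) with (2 * dm^2) by (field; lra).
      assert (dm*lam1 N <= dm*(2*dm)) by (apply Rmult_le_compat_l; lra). simpl. lra. }
    assert (Hd2 : dm <= 2 * e' * INR N) by lra.
    rewrite Rabs_right by lra.
    eapply Rle_lt_trans; [exact HlB|].
    apply (Rmult_lt_reg_r ((1-q) * INR N)); [nra|].
    unfold Rdiv. rewrite Rmult_assoc, Rinv_l, Rmult_1_r by nra.
    assert (q * dm * (L^2) <= q * (L^2) * (2 * e' * INR N)).
    { replace (q * dm * (L^2)) with ((q * L^2) * dm) by ring. apply Rmult_le_compat_l; [nra|lra]. }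
    assert (E : q * (L^2) * (2 * e' * INR N) = INR N * (1-q) * (2*q*(L^2)*eps/(4*q*(L^2)+1))) by (unfold e'; field; nra).
    assert (2*q*(L^2)*eps/(4*q*(L^2)+1) < eps).
    { apply (Rmult_lt_reg_r (4*q*(L^2)+1)); [nra|]. unfold Rdiv.
      rewrite Rmult_assoc, Rinv_l, Rmult_1_r by nra.
      assert (0 <= q * L^2) by nra. assert (0 <= q*L^2*eps) by (apply Rmult_le_pos; lra). lra. }
    assert (0 < INR N * (1-q)) by nra. nra.
Qed.
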